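(* Consider a hierarchical tensor factorization with mode tree $\mathcal T$ whose weight matrices evolve under gradient flow on $\phi_H$ for $t\ge0$, and assume the unbalancedness magnitude at initialization is $\epsilon\ge0$. Let $L_\nu:=|C(\nu)|+1$. Then for any $\nu\in\mathrm{int}(\mathcal T)$, $r\in[R_\nu]$ and time $t\ge0$ at which $\sigma_{\nu,r}(t)>0$, writing $g(t):=\langle-\nabla\mathcal L_H(\mathcal W_H(t)),\mathcal E_{\nu,r}(t)\rangle$: if $g(t)\ge0$ then $$\frac{\sigma_{\nu,r}(t)^2}{\sigma_{\nu,r}(t)^{2/L_\nu}+\epsilon}\,L_\nu\, g(t)\;\le\;\frac{d}{dt}\sigma_{\nu,r}(t)\;\le\;\big(\sigma_{\nu,r}(t)^{2/L_\nu}+\epsilon\big)^{L_\nu-1}L_\nu\, g(t);$$ and if $g(t)<0$ then $$\big(\sigma_{\nu,r}(t)^{2/L_\nu}+\epsilon\big)^{L_\nu-1}L_\nu\, g(t)\;\le\;\frac{d}{dt}\sigma_{\nu,r}(t)\;\le\;\frac{\sigma_{\nu,r}(t)^2}{\sigma_{\nu,r}(t)^{2/L_\nu}+\epsilon}\,L_\nu\, g(t).$$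
   Context: Fix $N\in\mathbb N$, $D_1,\dots,D_N\in\mathbb N$; $[K]:=\{1,\dots,K\}$. Norms are Frobenius norms, $\langle\cdot,\cdot\rangle$ the entrywise inner product, $\otimes$ the tensor product. A mode tree $\mathcal T$ over $[N]$ is a rooted tree whose nodes are labeled by subsets of $[N]$, with exactly $N$ leaves labeled $\{1\},\dots,\{N\}$, and where each interior node's label is the union of its children's labels; nodes are identified with labels, root $[N]$, $\mathrm{int}(\mathcal T)$ interior nodes, $Pa(\nu)$ parent, $C(\nu)$ children (fixed order). A hierarchical tensor factorization is given by $R_\nu\in\mathbb N$ ($\nu\in\mathrm{int}(\mathcal T)$), with $R_{Pa([N])}:=1$, $R_{\{n\}}:=D_n$, and weight matrices $W^{(\nu)}\in\mathbb R^{R_\nu\times R_{Pa(\nu)}}$. Intermediate tensors: $\mathcal W^{(\{n\},r)}:=W^{(\{n\})}_{:,r}$; for $\nu\in\mathrm{int}(\mathcal T)\setminus\{[N]\}$ (leaves to root), $r\in[R_{Pa(\nu)}]$: $\mathcal W^{(\nu,r)}:=\pi_\nu\big(\sum_{r'=1}^{R_\nu}W^{(\nu)}_{r',r}\bigotimes_{\nu_c\in C(\nu)}\mathcal W^{(\nu_c,r')}\big)$; end tensor $\mathcal W_H:=\pi_{[N]}\big(\sum_{r'=1}^{R_{[N]}}W^{([N])}_{r',1}\bigotimes_{\nu_c\in C([N])}\mathcal W^{(\nu_c,r')}\big)$, where $\pi_\nu$ permutes modes (ordered by children, each child's elements ascending) into ascending order of the elements of $\nu$. $\mathrm{LC}(\nu,r)$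 is the collection of vectors $W^{(\nu)}_{r,:}$ and $W^{(\nu_c)}_{:,r}$, $\nu_c\in C(\nu)$; $\sigma_{\nu,r}:=\prod_{w\in\mathrm{LC}(\nu,r)}\|w\|$ is the norm of the local component $W^{(\nu)}_{r,:}\otimes\bigotimes_{\nu_c}W^{(\nu_c)}_{:,r}$. $\mathcal E_{\nu,r}$ is the end tensor obtained from the same construction except that, for every $r'\in[R_{Pa(\nu)}]$, the tensor produced at node $\nu$ (the end tensor itself if $\nu=[N]$) is replaced by $\pi_\nu\big(\sigma_{\nu,r}^{-1}W^{(\nu)}_{r,r'}\bigotimes_{\nu_c\in C(\nu)}\mathcal W^{(\nu_c,r)}\big)$; $\mathcal E_{\nu,r}:=0$ if $\sigma_{\nu,r}=0$. $\mathcal L_H:\mathbb R^{D_1\times\cdots\times D_N}\to\mathbb R_{\ge0}$ is differentiable and locally smooth, $\phi_H((W^{(\nu)})_\nu):=\mathcal L_H(\mathcal W_H)$, gradient flow: $\frac{d}{dt}W^{(\nu)}(t)=-\frac{\partial}{\partial W^{(\nu)}}\phi_H((W^{(\nu')}(t))_{\nu'})$, $t\ge0$; time-$t$ quantities are computed from the weights at time $t$. The unbalancedness magnitude is $\max_{\nu\in\mathrm{int}(\mathcal T),r\in[R_\nu],w,w'\in\mathrm{LC}(\nu,r)}|\|w\|^2-\|w'\|^2|$. *)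

(* Defs.v *)
From HB Require Import structures.
From mathcomp Require Import all_boot all_order all_algebra.
From mathcomp Require Import reals exp.
Set Implicit Arguments. Unset Strict Implicit. Unset Printing Implicit Defensive.
Import Order.TTheory GRing.Theory Num.Theory.
Local Open Scope ring_scope.

Section HTF.
Variables (R : realType) (N : nat) (D : 'I_N -> nat).

(* a multi-index (i_1,...,i_N) with i_n in [D_n] (0-based) *)
Definition Idx := {dffun forall n : 'I_N, 'I_(D n)}.
Definition tensor := Idx -> R.
Definition tdot (X Y : tensor) : R := \sum_(i : Idx) X i * Y i.
Definition tnorm (X : tensor) : R := Num.sqrt (tdot X X).
Definition tadd (X Y : tensor) : tensor := fun i => X i + Y i.
Definition tsub (X Y : tensor) : tensor := fun i => X i - Y i.
Definition topp (X : tensor) : tensor := fun i => - X i.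

Definition is_gradient (L : tensor -> R) (G : tensor -> tensor) : Prop :=
  forall X e, 0 < e -> exists2 d, 0 < d &
    forall V, tnorm V < d -> `|L (tadd X V) - L X - tdot (G X) V| <= e * tnorm V.

Definition locally_lipschitz (G : tensor -> tensor) : Prop :=
  forall X, exists d K, 0 < d /\
    forall Y Z, tnorm (tsub Y X) < d -> tnorm (tsub Z X) < d ->
      tnorm (tsub (G Y) (G Z)) <= K * tnorm (tsub Y Z).

Definition has_deriv (f : R -> R) (t l : R) : Prop :=
  forall e, 0 < e -> exists2 d, 0 < d &
    forall h, h != 0 -> `|h| < d -> `|(f (t + h) - f t) / h - l| <= e.
Definition has_deriv_nonneg (f : R -> R) (t l : R) : Prop :=
  forall e, 0 < e -> exists2 d, 0 < d &
    forall h, h != 0 -> `|h| < d -> 0 <= t + h -> `|(f (t + h) - f t) / h - l| <= e.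

(* A mode tree over [N] whose nodes are identified with their labels is
   encoded by its set of labels T: it contains [N] and all singletons, not the
   empty set, and is laminar.  Parent = smallest strict superset in T,
   children = maximal strict subsets in T, leaves = singletons. *)
Definition is_mode_tree (T : {set {set 'I_N}}) : Prop :=
  [/\ setT \in T, (forall n, [set n] \in T), set0 \notin T &
      forall A B, A \in T -> B \in T ->
        [|| A \subset B, B \subset A | [disjoint A & B]]].

Variables (T : {set {set 'I_N}}) (Rk : {set 'I_N} -> nat).

Definition leaf_of (nu : {set 'I_N}) : option 'I_N := [pick n | nu == [set n]].
Definition interior (nu : {set 'I_N}) : bool := (nu \in T) && (1 < #|nu|)%N.
Definition children (nu : {set 'I_N}) : {set {set 'I_N}} :=
  [set c in T | (c \proper nu) && [forall c' in T, (c \proper c') ==> ~~ (c' \proper nu)]].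
Definition parent (nu : {set 'I_N}) : option {set 'I_N} :=
  [pick mu in T | (nu \proper mu) && [forall mu' in T, (nu \proper mu') ==> (mu \subset mu')]].

(* R_nu, with R_{n} := D_n for leaves and R_{Pa([N])} := 1 *)
Definition rk (nu : {set 'I_N}) : nat :=
  if leaf_of nu is Some n then D n else Rk nu.
Definition rkP (nu : {set 'I_N}) : nat :=
  if parent nu is Some mu then rk mu else 1.

(* weight matrices W^(nu) in R^{R_nu x R_{Pa(nu)}} (values at non-nodes are unused) *)
Definition Weights := forall nu : {set 'I_N}, 'M[R]_(rk nu, rkP nu).

(* entry (i,j) (0-based) of a matrix, 0 when out of range *)
Definition mx_at m n (A : 'M[R]_(m, n)) (i j : nat) : R :=
  match @insub _ (fun k => (k < m)%N) 'I_m i, @insub _ (fun k => (k < n)%N) 'I_n j with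
  | Some i', Some j' => A i' j'
  | _, _ => 0
  end.

Variable W : Weights.

Definition row_norm (nu : {set 'I_N}) (r : nat) : R :=
  Num.sqrt (\sum_(j < rkP nu) mx_at (W nu) r j ^+ 2).
Definition col_norm (nu : {set 'I_N}) (r : nat) : R :=
  Num.sqrt (\sum_(i < rk nu) mx_at (W nu) i r ^+ 2).

Definition sigma (nu : {set 'I_N}) (r : nat) : R :=
  row_norm nu r * \prod_(c in children nu) col_norm c r.

(* Intermediate tensors W^(nu,r), evaluated at a full multi-index i (they
   only depend on the coordinates in nu).  The tensor product over the
   children followed by pi_nu evaluates at i to the product of the children
   tensors at i.  [ov = Some (nu0, r0)] performs the replacement defining
   E_{nu0,r0}.  [k] is a fuel (the tree has depth < N). *)
Fixpoint tens (ov : option ({set 'I_N} * nat)) (k : nat) (nu : {set 'I_N})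
    (r : nat) (i : Idx) : R :=
  match k with
  | 0 => 0
  | k'.+1 =>
    if leaf_of nu is Some n then mx_at (W nu) (i n) r else
    let std := \sum_(r' < rk nu)
                 mx_at (W nu) r' r * \prod_(c in children nu) tens ov k' c r' i in
    match ov with
    | Some (nu0, r0) =>
        if nu == nu0 then
          (if sigma nu0 r0 == 0 then 0 else
           (sigma nu0 r0)^-1 * mx_at (W nu) r0 r * \prod_(c in children nu) tens ov k' c r0 i)
        else std
    | None => std
    end
  end.

Definition endT : tensor := fun i => tens None N.+1 setT 0 i.

Definition Etens (nu : {set 'I_N}) (r : nat) : tensor := fun i =>
  if sigma nu r == 0 then 0 else tens (Some (nu, r)) N.+1 setT 0 i.

Definition lc_sqnorms (nu : {set 'I_N}) (r : nat) : seq R :=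
  row_norm nu r ^+ 2 :: [seq col_norm c r ^+ 2 | c <- enum (children nu)].
Definition unbalancedness : R :=
  \big[Num.max/0]_(nu | interior nu) \big[Num.max/0]_(r < rk nu)
    \big[Num.max/0]_(a <- lc_sqnorms nu r) \big[Num.max/0]_(b <- lc_sqnorms nu r)
      `|a - b|.

End HTF.

Definition bump (R : realType) N (D : 'I_N -> nat) T Rk
    (W : Weights R D T Rk) (nu0 : {set 'I_N}) (i0 j0 : nat) (s : R)
    : Weights R D T Rk :=
  fun mu => W mu + s *: \matrix_(a, b)
    (((mu == nu0) && (a == i0 :> nat) && (b == j0 :> nat))%:R : R).

Definition phiH (R : realType) N (D : 'I_N -> nat) T Rk (L : tensor R D -> R)
    (W : Weights R D T Rk) : R := L (endT W).

(* gradient flow on phi_H for t >= 0: each entry of each W^(nu) has time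
   derivative (relative to [0,+oo)) equal to minus the partial derivative of
   phi_H with respect to that entry *)
Definition gradient_flow (R : realType) N (D : 'I_N -> nat) T Rk
    (L : tensor R D -> R) (W : R -> Weights R D T Rk) : Prop :=
  forall t, 0 <= t -> forall nu, nu \in T ->
    forall (i : 'I_(rk D Rk nu)) (j : 'I_(rkP D T Rk nu)),
      exists d, has_deriv (fun s => phiH L (bump (W t) nu i j s)) 0 d /\
                has_deriv_nonneg (fun s => W s nu i j) t (- d).

(* Main.v *)
Require Import Defs.
From HB Require Import structures.
From mathcomp Require Import all_boot all_order all_algebra.
From mathcomp Require Import reals exp.
From mathcomp Require classical_sets.
From mathcomp Require Import ring lra.
Import Order.TTheory GRing.Theory Num.Theory.
Local Open Scope ring_scope.
Set Implicit Arguments. Unset Strict Implicit. Unset Printing Implicit Defensive.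

Module CalcM.
Import classical_sets.

Section Calc.
Variable R : realType.
Implicit Types (f g : R -> R) (t a b : R).

Definition Do f t a := forall e, 0 < e -> exists2 d, 0 < d &
  forall h, `|h| < d -> 0 <= t + h -> `|f (t + h) - f t - a * h| <= e * `|h|.

Lemma Do_of f t a : has_deriv_nonneg f t a -> Do f t a.
Proof.
move=> H e e0; have [d d0 Hd] := H e e0; exists d => // h hd th.
have [->|h0] := eqVneq h 0; first by rewrite addr0 subrr mulr0 subr0 normr0 mulr0.
have := Hd h h0 hd th.
have -> : f (t + h) - f t - a * h = ((f (t + h) - f t) / h - a) * h.
  by rewrite mulrBl divfK.
by rewrite normrM => /ler_wpM2r; apply; rewrite normr_ge0.
Qed.

Lemma Do_to f t a : Do f t a -> has_deriv_nonneg f t a.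
Proof.
move=> H e e0; have [d d0 Hd] := H e e0; exists d => // h h0 hd th.
have := Hd h hd th.
have -> : f (t + h) - f t - a * h = ((f (t + h) - f t) / h - a) * h.
  by rewrite mulrBl divfK.
by rewrite normrM ler_pM2r // normr_gt0.
Qed.

Lemma Do_const c t : Do (fun _ => c) t 0.
Proof.
move=> e e0; exists 1 => // h _ _; rewrite subrr mul0r subr0 normr0.
by rewrite mulr_ge0 // ltW.
Qed.

Lemma Do_add f g t a b : Do f t a -> Do g t b ->
  Do (fun u => f u + g u) t (a + b).
Proof.
move=> Hf Hg e e0.
have e2 : 0 < e / 2 by rewrite divr_gt0.
have [d1 d10 H1] := Hf _ e2; have [d2 d20 H2] := Hg _ e2.
exists (Num.min d1 d2); first by rewrite lt_min d10 d20.
move=> h; rewrite lt_min => /andP[h1 h2] th.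
have := H1 h h1 th; have := H2 h h2 th.
have -> : f (t + h) + g (t + h) - (f t + g t) - (a + b) * h =
  (f (t + h) - f t - a * h) + (g (t + h) - g t - b * h) by ring.
move=> A B; apply: le_trans (ler_normD _ _) _.
have -> : e * `|h| = e / 2 * `|h| + e / 2 * `|h| by field.
exact: lerD.
Qed.

Lemma Do_scale c f t a : Do f t a -> Do (fun u => c * f u) t (c * a).
Proof.
move=> Hf e e0.
have ec : 0 < e / (`|c| + 1) by rewrite divr_gt0 // ltr_wpDl.
have [d d0 H] := Hf _ ec; exists d => // h hd th.
have -> : c * f (t + h) - c * f t - c * a * h = c * (f (t + h) - f t - a * h) by ring.
rewrite normrM; apply: le_trans (ler_wpM2l (normr_ge0 c) (H h hd th)) _.
rewrite mulrA ler_wpM2r // mulrA ler_pdivrMr ?ltr_wpDl //.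
have := normr_ge0 c; nra.
Qed.

Lemma Do_opp f t a : Do f t a -> Do (fun u => - f u) t (- a).
Proof.
move=> H.
have E : (fun u => - f u) = (fun u => -1 * f u).
  by apply: boolp.funext => u; rewrite mulN1r.
by rewrite E -(mulN1r a); apply: Do_scale.
Qed.

Lemma Do_bound f t a : Do f t a -> exists2 d, 0 < d &
  forall h, `|h| < d -> 0 <= t + h -> `|f (t + h) - f t| <= (`|a| + 1) * `|h|.
Proof.
move=> H; have [d d0 Hd] := H 1 ltr01; exists d => // h hd th.
have := Hd h hd th; rewrite mul1r => A.
have -> : f (t + h) - f t = (f (t + h) - f t - a * h) + a * h by ring.
apply: le_trans (ler_normD _ _) _; rewrite normrM mulrDl mul1r addrC.
exact: lerD.
Qed.

Lemma Do_sqr f t a : Do f t a -> Do (fun u => f u ^+ 2) t (2 * f t * a).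
Proof.
move=> Hf e e0.
set M := `|f t| + 1.
have M0 : 0 < M by rewrite ltr_wpDl.
have e1 : 0 < e / (4 * M) by rewrite divr_gt0 // mulr_gt0.
have [d1 d10 H1] := Hf _ e1.
have [d2 d20 H2] := Do_bound Hf.
set B := `|a| + 1.
have B0 : 0 < B by rewrite ltr_wpDl.
have e3 : 0 < e / (2 * B ^+ 2) by rewrite divr_gt0 // mulr_gt0 // exprn_gt0.
exists (Num.min d1 (Num.min d2 (e / (2 * B ^+ 2)))).
  by rewrite !lt_min d10 d20 e3.
move=> h; rewrite !lt_min => /and3P[h1 h2 h3] th.
have A1 := H1 h h1 th; have A2 := H2 h h2 th.
have -> : f (t + h) ^+ 2 - f t ^+ 2 - 2 * f t * a * h =
  (f (t + h) - f t) ^+ 2 + 2 * f t * (f (t + h) - f t - a * h) by ring.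
apply: le_trans (ler_normD _ _) _.
have hp := normr_ge0 h.
have S1 : `|(f (t + h) - f t) ^+ 2| <= e / 2 * `|h|.
  rewrite normrX; apply: le_trans (_ : (B * `|h|) ^+ 2 <= _).
    by rewrite lerXn2r // ?nnegrE ?normr_ge0 // mulr_ge0 // ltW.
  rewrite exprMn expr2 mulrA.
  have : B ^+ 2 * `|h| <= e / 2.
    rewrite mulrC -ler_pdivlMr ?exprn_gt0 //; move: h3.
    by rewrite invfM mulrA => /ltW.
  by move=> X; rewrite ler_wpM2r.
have S2 : `|2 * f t * (f (t + h) - f t - a * h)| <= e / 2 * `|h|.
  rewrite normrM; apply: le_trans (ler_wpM2l (normr_ge0 _) A1) _.
  rewrite mulrA ler_wpM2r // normrM.
  have -> : `|2 : R| = 2 by rewrite ger0_norm.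
  have fM : `|f t| <= M by rewrite lerDl.
  have -> : 2 * `|f t| * (e / (4 * M)) = (`|f t| / M) * (e / 2).
    by field; rewrite gt_eqF.
  rewrite ler_piMl ?divr_ge0 ?ltW //.
  by rewrite ltr_pdivrMr // mul1r /M ltrDl ltr01.
have -> : e * `|h| = e / 2 * `|h| + e / 2 * `|h| by field.
exact: lerD.
Qed.


Lemma Do_ext f g t a : (forall u, f u = g u) -> Do f t a -> Do g t a.
Proof. by move=> E; have -> : f = g by apply: boolp.funext. Qed.

Lemma Do_val f t a b : a = b -> Do f t a -> Do f t b.
Proof. by move=> ->. Qed.

Lemma Do_mul f g t a b : Do f t a -> Do g t b ->
  Do (fun u => f u * g u) t (f t * b + g t * a).
Proof.
move=> Hf Hg.
have Hp := Do_sqr (Do_add Hf Hg).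
have Hm := Do_sqr (Do_add Hf (Do_opp Hg)).
have := Do_scale (4^-1) (Do_add Hp (Do_opp Hm)).
move/(Do_ext (g := fun u => f u * g u)) => H.
apply: Do_val (H _) => [|u]; by field.
Qed.

Lemma Do_sqrt f t a : 0 < f t -> Do f t a ->
  Do (fun u => Num.sqrt (f u)) t (a / (2 * Num.sqrt (f t))).
Proof.
move=> fp Hf e e0.
set s0 := Num.sqrt (f t).
have s00 : 0 < s0 by rewrite sqrtr_gt0.
set B := `|a| + 1.
have B0 : 0 < B by rewrite ltr_wpDl.
have e1 : 0 < e * s0 by rewrite mulr_gt0.
have [d1 d10 H1] := Hf _ e1.
have [d2 d20 H2] := Do_bound Hf.
have d30 : 0 < f t / B by rewrite divr_gt0.
have d40 : 0 < e * s0 ^+ 3 / B ^+ 2 by rewrite divr_gt0 ?mulr_gt0 ?exprn_gt0.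
exists (Num.min (Num.min d1 d2) (Num.min (f t / B) (e * s0 ^+ 3 / B ^+ 2))).
  by rewrite !lt_min d10 d20 d30 d40.
move=> h; rewrite !lt_min => /andP[/andP[h1 h2] /andP[h3 h4]] th.
have A1 := H1 h h1 th; have A2 := H2 h h2 th.
have hp := normr_ge0 h.
set f1 := f (t + h); set f0 := f t.
set s1 := Num.sqrt f1.
have f1p : 0 < f1.
  have : `|f1 - f0| < f0.
    apply: le_lt_trans A2 _; rewrite mulrC -ltr_pdivlMr //.
  rewrite ltr_norml => /andP[+ _]; lra.
have s10 : 0 <= s1 by exact: sqrtr_ge0.
have Ef1 : f1 = s1 ^+ 2 by rewrite sqr_sqrtr // ltW.
have Ef0 : f0 = s0 ^+ 2 by rewrite sqr_sqrtr // ltW.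
set rho := f1 - f0 - a * h.
set Dl := f1 - f0.
have key : s1 - s0 - a / (2 * s0) * h =
    rho / (2 * s0) - Dl ^+ 2 / (2 * s0 * (s1 + s0) ^+ 2).
  rewrite /rho /Dl Ef1 Ef0; field.
  by rewrite !gt_eqF // ltr_wpDl.
rewrite key; apply: le_trans (ler_normB _ _) _.
have -> : e * `|h| = e / 2 * `|h| + e / 2 * `|h| by field.
apply: lerD.
  rewrite normrM normfV normrM (ger0_norm (ltW s00)) (ger0_norm (ler0n _ 2)).
  rewrite ler_pdivrMr ?mulr_gt0 //.
  apply: le_trans A1 _.
  by have -> : e / 2 * `|h| * (2 * s0) = e * s0 * `|h| by field.
have Dl2 : Dl ^+ 2 <= B ^+ 2 * `|h| ^+ 2.
  rewrite -exprMn -real_normK ?num_real //.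
  by rewrite lerXn2r // ?nnegrE ?normr_ge0 // mulr_ge0 // ltW.
have h4' : `|h| * B ^+ 2 <= e * s0 ^+ 3.
  by rewrite -ler_pdivlMr ?exprn_gt0 // ltW.
have s03 : 0 < 2 * s0 ^+ 3 by rewrite mulr_gt0 // exprn_gt0.
rewrite ger0_norm; last by rewrite divr_ge0 ?sqr_ge0 // mulr_ge0 ?sqr_ge0 // mulr_ge0 // ltW.
apply: (@le_trans _ _ (Dl ^+ 2 / (2 * s0 ^+ 3))).
  rewrite ler_wpM2l ?sqr_ge0 // lef_pV2 ?posrE //; last first.
    by rewrite mulr_gt0 ?exprn_gt0 // ?mulr_gt0 // ltr_wpDl.
  nra.
rewrite ler_pdivrMr //; nra.
Qed.

Lemma Do_prod (I : eqType) (s : seq I) (F : I -> R -> R) (A : I -> R) t :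
  (forall i, i \in s -> Do (F i) t (A i)) -> (forall i, i \in s -> F i t != 0) ->
  Do (fun u => \prod_(i <- s) F i u) t
     ((\prod_(i <- s) F i t) * \sum_(i <- s) A i / F i t).
Proof.
elim: s => [|x s IH] HD HF.
  by apply: Do_ext (Do_val _ (Do_const 1 t)) => [u|]; rewrite !big_nil ?mulr0.
have Hx := HD x (mem_head _ _).
have Fx := HF x (mem_head _ _).
have IH' := IH (fun i hi => HD i (mem_behead (s := x :: s) hi)) (fun i hi => HF i (mem_behead (s := x :: s) hi)).
apply: Do_ext (Do_val _ (Do_mul Hx IH')) => [u|]; first by rewrite big_cons.
rewrite !big_cons; field; exact: Fx.
Qed.


Lemma Do_sum (I : Type) (s : seq I) (F : I -> R -> R) (A : I -> R) t :
  (forall i, Do (F i) t (A i)) ->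
  Do (fun u => \sum_(i <- s) F i u) t (\sum_(i <- s) A i).
Proof.
move=> HD; elim: s => [|x s IH].
  by apply: Do_ext (Do_val _ (Do_const 0 t)) => [u|]; rewrite !big_nil.
by apply: Do_ext (Do_val _ (Do_add (HD x) IH)) => [u|]; rewrite !big_cons.
Qed.

Lemma Do_const_eq h t : 0 <= t ->
  (forall s, 0 <= s -> s <= t -> Do h s 0) -> h t = h 0.
Proof.
move=> t0 HD.
suff key : forall e, 0 < e -> `|h t - h 0| <= e * t.
  apply/eqP; rewrite -subr_eq0 -normr_eq0; apply/eqP.
  apply: le_anti; rewrite normr_ge0 andbT.
  rewrite leNgt; apply/negP => Dp.
  have e0 : 0 < `|h t - h 0| / (2 * (t + 1)).
    by rewrite divr_gt0 // mulr_gt0 // ltr_wpDl.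
  have := key _ e0.
  rewrite mulrC mulrA ler_pdivlMr ?mulr_gt0 ?ltr_wpDl // => H.
  have : `|h t - h 0| * (2 * (t + 1)) <= `|h t - h 0| * (t + t).
    by apply: le_trans H _; rewrite mulrC ler_wpM2l ?normr_ge0 // lerDr.
  nra.
move=> e e0.
pose A : classical_sets.set R := fun x =>
  0 <= x /\ x <= t /\ forall y, 0 <= y -> y <= x -> `|h y - h 0| <= e * y.
have A0 : A 0.
  split; first exact: lexx. split; first exact: t0.
  move=> y y0 y1; have -> : y = 0 by apply: le_anti; rewrite y0 y1.
  by rewrite subrr normr0 mulr0.
have Aub : forall x, A x -> x <= t by move=> x [_ []].
have hs : classical_sets.has_sup A.
  by split; [exists 0 | exists t => x /Aub].
set c := reals.sup A.
have c0 : 0 <= c by apply: sup_upper_bound.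
have ct : c <= t by apply: ge_sup => //; exists 0.
have [d d0 Hd] := HD c c0 ct e e0.
have Pc : forall y, 0 <= y -> y <= c -> `|h y - h 0| <= e * y.
  move=> y y0; rewrite le_eqVlt => /orP[/eqP ->|yc]; last first.
    have cy0 : 0 < c - y by rewrite subr_gt0.
    have [x [x0 [xt Hx]] Hxc] := sup_adherent cy0 hs.
    apply: Hx => //; move: Hxc; rewrite -/c; lra.
  have [->|cp] := eqVneq c 0; first by rewrite subrr normr0 mulr0.
  have cp' : 0 < c by rewrite lt_def cp c0.
  have m0 : 0 < Num.min (d / 2) c by rewrite lt_min cp' divr_gt0.
  have [x [x0 [xt Hx]] Hxc] := sup_adherent m0 hs.
  have xc : x <= c by apply: sup_upper_bound.
  rewrite -/c in Hxc.
  have Hm1 : Num.min (d / 2) c <= d / 2 by rewrite ge_min lexx.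
  have := Hd (x - c).
  rewrite subrKC mul0r subr0 => /(_ _ x0) H.
  have H' : `|h x - h c| <= e * (c - x).
    have xc' : 0 <= c - x by rewrite subr_ge0.
    rewrite (distrC x c) (ger0_norm xc') in H.
    apply: H; lra.
  have Hx' := Hx x x0 (lexx x).
  have -> : h c - h 0 = - (h x - h c) + (h x - h 0) by ring.
  apply: le_trans (ler_normD _ _) _; rewrite normrN.
  have -> : e * c = e * (c - x) + e * x by ring.
  exact: lerD.
have /eqP ec : c == t.
  rewrite eq_le ct /=; rewrite leNgt; apply/negP => ctl.
  have u0 : 0 < Num.min (d / 2) (t - c) by rewrite lt_min divr_gt0 // subr_gt0.
  have Hu1 : Num.min (d / 2) (t - c) <= d / 2 by rewrite ge_min lexx.
  have Hu2 : Num.min (d / 2) (t - c) <= t - c by rewrite ge_min lexx orbT.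
  set u := Num.min (d / 2) (t - c) in u0 Hu1 Hu2.
  have : A (c + u).
    split; first lra. split; first lra.
    move=> y y0 yu.
    have [yc|cy] := lerP y c; first exact: Pc.
    have := Hd (y - c).
    rewrite subrKC mul0r subr0 => /(_ _ y0) H.
    have H' : `|h y - h c| <= e * (y - c).
      have cy' : 0 <= y - c by rewrite subr_ge0 ltW.
      rewrite (ger0_norm cy') in H.
      apply: H; lra.
    have Hc := Pc c c0 (lexx c).
    have -> : h y - h 0 = (h y - h c) + (h c - h 0) by ring.
    apply: le_trans (ler_normD _ _) _.
    have -> : e * y = e * (y - c) + e * c by ring.
    exact: lerD.
  move/(sup_upper_bound hs); rewrite -/c; lra.
by rewrite -ec; apply: Pc.
Qed.


Lemma small_zero (x : R) : (forall e, 0 < e -> `|x| <= e) -> x = 0.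
Proof.
move=> H; apply/eqP; rewrite -normr_eq0; apply/eqP; apply: le_anti.
rewrite normr_ge0 andbT leNgt; apply/negP => xp.
have := H (`|x| / 2); rewrite divr_gt0 // => /(_ isT); lra.
Qed.

Lemma hd_unique f t d1 d2 : has_deriv f t d1 -> has_deriv f t d2 -> d1 = d2.
Proof.
move=> H1 H2; apply/eqP; rewrite -subr_eq0; apply/eqP; apply: small_zero => e e0.
have e2 : 0 < e / 2 by rewrite divr_gt0.
have [a a0 Ha] := H1 _ e2; have [b b0 Hb] := H2 _ e2.
set h := Num.min a b / 2.
have m0 : 0 < Num.min a b by rewrite lt_min a0 b0.
have h0 : 0 < h by rewrite divr_gt0.
have hn : `|h| < Num.min a b by rewrite gtr0_norm // ltr_pdivrMr // ltr_pMr // ltr1n.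
have ha : `|h| < a by apply: lt_le_trans hn _; rewrite ge_min lexx.
have hb : `|h| < b by apply: lt_le_trans hn _; rewrite ge_min lexx orbT.
have hz : h != 0 by rewrite gt_eqF.
have := Ha h hz ha; have := Hb h hz hb.
set q := (f (t + h) - f t) / h => A B.
have -> : d1 - d2 = - (q - d1) + (q - d2) by ring.
apply: le_trans (ler_normD _ _) _; rewrite normrN.
have -> : e = e / 2 + e / 2 by field.
exact: lerD.
Qed.

End Calc.

Lemma tnormZ (R : realType) N (D : 'I_N -> nat) (u : R) (P : tensor R D) :
  tnorm (fun i => u * P i) = `|u| * tnorm P.
Proof.
rewrite /tnorm /tdot.
have -> : \sum_i u * P i * (u * P i) = u ^+ 2 * \sum_i P i * P i.
  by rewrite mulr_sumr; apply: eq_bigr => i _; ring.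
by rewrite sqrtrM ?sqr_ge0 // sqrtr_sqr.
Qed.

Lemma grad_deriv (R : realType) N (D : 'I_N -> nat) (L : tensor R D -> R) G X P :
  is_gradient L G ->
  has_deriv (fun u => L (tadd X (fun i => u * P i))) 0 (tdot (G X) P).
Proof.
move=> HG e e0.
set M := tnorm P + 1.
have M0 : 0 < M by rewrite ltr_wpDl // sqrtr_ge0.
have [d d0 Hd] := HG X (e / M) (divr_gt0 e0 M0).
exists (d / M); first by rewrite divr_gt0.
move=> h h0 hd.
have E0 : tadd X (fun i => (0 + h) * P i) = tadd X (fun i => h * P i).
  by rewrite add0r.
have E1 : L (tadd X (fun i => 0 * P i)) = L X.
  by congr L; apply: boolp.funext => i; rewrite /tadd mul0r addr0.
rewrite E0 E1.
have hn : tnorm (fun i => h * P i) < d.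
  rewrite tnormZ; move: hd; rewrite ltr_pdivlMr // => H.
  apply: le_lt_trans H; apply: ler_wpM2l; [exact: normr_ge0 | by rewrite lerDl].
have := Hd _ hn.
have -> : tdot (G X) (fun i => h * P i) = h * tdot (G X) P.
  by rewrite /tdot mulr_sumr; apply: eq_bigr => i _; ring.
rewrite tnormZ => H.
have -> : (L (tadd X (fun i => h * P i)) - L X) / h - tdot (G X) P =
   (L (tadd X (fun i => h * P i)) - L X - h * tdot (G X) P) / h.
  by field.
rewrite normrM normfV ler_pdivrMr ?normr_gt0 //.
apply: le_trans H _.
rewrite mulrA mulrAC ler_wpM2r ?normr_ge0 // mulrAC ler_pdivrMr //.
by apply: ler_wpM2l; [exact: ltW | rewrite lerDl].
Qed.


End CalcM.
Import CalcM.

Section Tree.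
Variable N : nat.
Variable T : {set {set 'I_N}}.
Hypothesis HT : is_mode_tree T.

Lemma T_nonempty A : A \in T -> A != set0.
Proof. by case: HT => _ _ H0 _ AT; apply/eqP => E; move: H0; rewrite -E AT. Qed.

Lemma T_lam A B : A \in T -> B \in T ->
  [|| A \subset B, B \subset A | [disjoint A & B]].
Proof. by case: HT => _ _ _ H; apply: H. Qed.

Lemma childrenP nu c : c \in children T nu ->
  [/\ c \in T, c \proper nu &
      forall c', c' \in T -> c \proper c' -> ~~ (c' \proper nu)].
Proof.
rewrite inE => /andP[cT /andP[cn /forallP H]]; split => // c' c'T cc'.
by have := H c'; rewrite c'T cc'.
Qed.

Lemma children_disj nu c c' : c \in children T nu -> c' \in children T nu ->
  c != c' -> [disjoint c & c'].
Proof.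
move=> /childrenP[cT cn Hc] /childrenP[c'T c'n Hc'] cc'.
have := T_lam cT c'T; case/or3P => // H.
  have : c \proper c' by rewrite properEneq cc' H.
  by move=> /(Hc _ c'T); rewrite c'n.
have : c' \proper c by rewrite properEneq eq_sym cc' H.
by move=> /(Hc' _ cT); rewrite cn.
Qed.

Lemma disj_sub_nonempty (A B C : {set 'I_N}) : A != set0 -> A \subset B -> [disjoint B & C] ->
  ~~ (A \subset C).
Proof.
move=> A0 AB BC; apply/negP => AC.
case/set0Pn: A0 => x xA.
have xB := subsetP AB x xA; have xC := subsetP AC x xA.
by move/pred0P: BC => /(_ x); rewrite /= xB xC.
Qed.

Lemma child_contains nu0 mu : nu0 \in T -> mu \in T -> nu0 \proper mu ->
  exists2 c0, c0 \in children T mu & nu0 \subset c0.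
Proof.
move=> n0T muT n0mu.
pose S := [set X in T | (nu0 \subset X) && (X \proper mu)].
have n0S : nu0 \in S by rewrite inE n0T subxx n0mu.
case: (arg_maxnP (fun X : {set 'I_N} => #|X|) n0S) => c0.
move=> c0S Hmax; have : c0 \in S by exact: c0S.
rewrite inE => /andP[c0T /andP[n0c0 c0mu]].
exists c0 => //.
rewrite inE c0T c0mu /=; apply/forallP => c'; apply/implyP => c'T.
apply/implyP => c0c'; apply/negP => c'mu.
have : c' \in S by rewrite inE c'T c'mu (subset_trans n0c0 (proper_sub c0c')).
move=> /Hmax H; have H' : (#|c'| <= #|c0|)%N := H.
by move: (proper_card c0c'); rewrite ltnNge H'.
Qed.

Lemma card_gt1 (A B : {set 'I_N}) : A != set0 -> A \proper B -> (1 < #|B|)%N.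
Proof.
move=> A0 AB; apply: leq_trans (proper_card AB).
by rewrite ltnS card_gt0.
Qed.

Lemma leaf_of_None (nu : {set 'I_N}) : (1 < #|nu|)%N -> leaf_of nu = None.
Proof.
move=> H; rewrite /leaf_of; case: pickP => // n /eqP E.
by move: H; rewrite E cards1.
Qed.

Lemma leaf_of_Some (nu : {set 'I_N}) n : leaf_of nu = Some n -> nu = [set n].
Proof. by rewrite /leaf_of; case: pickP => // m /eqP E [<-]. Qed.

End Tree.

Section Tens.
Variables (R : realType) (N : nat) (D : 'I_N -> nat).
Variables (T : {set {set 'I_N}}) (Rk : {set 'I_N} -> nat).
Hypothesis HT : is_mode_tree T.

Notation Wts := (Weights R D T Rk).
Notation fam := (nat -> {set 'I_N} -> nat -> Idx D -> R).

Definition X (W : Wts) : fam := fun k mu j i => tens W None k mu j i.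

Fixpoint tensR (W : Wts) (nu0 : {set 'I_N}) (Phi : nat -> nat -> Idx D -> R)
   (k : nat) (mu : {set 'I_N}) (j : nat) (i : Idx D) : R :=
  match k with
  | 0 => 0
  | k'.+1 =>
    if mu == nu0 then Phi k' j i else
    if leaf_of mu is Some n then mx_at (W mu) (i n) j else
    \sum_(r' < rk D Rk mu)
       mx_at (W mu) r' j * \prod_(c in children T mu) tensR W nu0 Phi k' c r' i
  end.

Definition sol (W : Wts) (nu1 : {set 'I_N}) (F : fam) :=
  [/\ (forall mu j i, F 0%N mu j i = 0),
      (forall k mu j i, mu \in T -> nu1 \proper mu ->
         F k.+1 mu j i = \sum_(r' < rk D Rk mu)
            mx_at (W mu) r' j * \prod_(c in children T mu) F k c r' i) &
      (forall k c j i, c \in T -> [disjoint nu1 & c] -> F k c j i = X W k c j i)].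

Lemma X_std W k mu j i : leaf_of mu = None ->
  X W k.+1 mu j i = \sum_(r' < rk D Rk mu)
     mx_at (W mu) r' j * \prod_(c in children T mu) X W k c r' i.
Proof. by move=> H; rewrite /X /= H. Qed.

Lemma prod_split W nu1 F mu c0 k r' i : sol W nu1 F ->
  nu1 \in T -> c0 \in children T mu -> nu1 \subset c0 ->
  \prod_(c in children T mu) F k c r' i =
  F k c0 r' i * \prod_(c in children T mu | c != c0) X W k c r' i.
Proof.
move=> [_ _ Hd] n1T c0m n1c0; rewrite (bigD1 c0) //=; congr (_ * _).
apply: eq_bigr => c /andP[cm cc0]; apply: Hd; first by case/childrenP: cm.
have dj := children_disj HT cm c0m cc0.
apply/pred0P => x /=; apply/negP => /andP[x1 xc].
have xc0 := subsetP n1c0 x x1.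
by move/pred0P: dj => /(_ x); rewrite /= xc xc0.
Qed.

Lemma prop W nu1 (F1 F0 : fam) n (Fb : 'I_n -> fam) (a0 : R) (a : 'I_n -> R) :
  nu1 \in T -> sol W nu1 F1 -> sol W nu1 F0 -> (forall b, sol W nu1 (Fb b)) ->
  (forall k j i, F1 k nu1 j i = a0 * F0 k nu1 j i + \sum_(b < n) a b * Fb b k nu1 j i) ->
  forall k mu j i, mu \in T -> nu1 \subset mu ->
    F1 k mu j i = a0 * F0 k mu j i + \sum_(b < n) a b * Fb b k mu j i.
Proof.
move=> n1T S1 S0 Sb Hb k; elim: k => [|k IH] mu j i muT n1mu.
  case: S1 => -> _ _; case: S0 => -> _ _; rewrite mulr0 add0r.
  by rewrite big1 // => b _; case: (Sb b) => -> _ _; rewrite mulr0.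
have [<-|nemu] := eqVneq nu1 mu; first exact: Hb.
have n1pmu : nu1 \proper mu by rewrite properEneq nemu.
have [c0 c0m n1c0] := child_contains n1T muT n1pmu.
have c0T : c0 \in T by case/childrenP: c0m.
case: (S1) => _ R1 _; case: (S0) => _ R0 _.
rewrite R1 // R0 //.
set Q := fun r' => \prod_(c in children T mu | c != c0) X W k c r' i.
set w := fun r' : 'I_(rk D Rk mu) => mx_at (W mu) r' j.
have E1 : forall G : fam, sol W nu1 G ->
   \sum_(r' < rk D Rk mu) mx_at (W mu) r' j * \prod_(c in children T mu) G k c r' i
   = \sum_(r' < rk D Rk mu) w r' * (G k c0 r' i * Q r').
  by move=> G SG; apply: eq_bigr => r' _; rewrite (prod_split k r' i SG n1T c0m n1c0).
rewrite (E1 _ S1) (E1 _ S0).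
rewrite (eq_bigr (fun b => a b * \sum_(r' < rk D Rk mu) w r' * (Fb b k c0 r' i * Q r'))); last first.
  by move=> b _; case: (Sb b) => _ Rb _; rewrite Rb // E1.
have E2 : \sum_(r' < rk D Rk mu) w r' * (F1 k c0 r' i * Q r') =
  \sum_(r' < rk D Rk mu) w r' * ((a0 * F0 k c0 r' i +
        \sum_(b < n) a b * Fb b k c0 r' i) * Q r').
  by apply: eq_bigr => r' _; rewrite IH.
rewrite E2 mulr_sumr.
rewrite (eq_bigr (fun b => \sum_(r' < rk D Rk mu) a b * (w r' * (Fb b k c0 r' i * Q r'))));
  last by move=> b _; rewrite mulr_sumr.
rewrite exchange_big -big_split /=; apply: eq_bigr => r' _.
rewrite mulrDl mulrDr mulr_suml mulr_sumr; congr (_ + _); first ring.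
by apply: eq_bigr => b _; ring.
Qed.


Lemma mx_at_in m n (A : 'M[R]_(m, n)) (i : 'I_m) (j : 'I_n) : mx_at A i j = A i j.
Proof. by rewrite /mx_at !valK. Qed.

Lemma mx_at_out m n (A : 'M[R]_(m, n)) i j : ((m <= i) || (n <= j))%N -> mx_at A i j = 0.
Proof.
rewrite /mx_at; case: insubP => [i' /= Hi _|//]; case: insubP => [j' /= Hj _|//].
by rewrite leqNgt Hi leqNgt Hj.
Qed.

Lemma sum_delta n (j : nat) (g : nat -> R) :
  \sum_(b < n) ((b : nat) == j)%:R * g b = (j < n)%:R * g j.
Proof.
case: (ltnP j n) => hj.
  rewrite (bigD1 (Ordinal hj)) //= eqxx mul1r big1 ?addr0 ?mul1r //.
  move=> b /negbTE bj; case: eqP => [E|_]; last by rewrite mul0r.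
  by move: bj; rewrite (_ : b = Ordinal hj) ?eqxx //; apply: val_inj.
rewrite mul0r big1 // => b _; case: eqP => [E|_]; last by rewrite mul0r.
by move: (ltn_ord b); rewrite E ltnNge hj.
Qed.

Lemma bump_other (W : Wts) nu0 a b s mu : mu != nu0 -> Defs.bump W nu0 a b s mu = W mu.
Proof.
move=> H; apply/matrixP => x y; rewrite !mxE.
by rewrite (negbTE H) /= mulr0 addr0.
Qed.

Lemma mx_at_bump (W : Wts) nu0 a b s mu x y :
  (a < rk D Rk nu0)%N -> (b < rkP D T Rk nu0)%N ->
  mx_at (Defs.bump W nu0 a b s mu) x y =
  mx_at (W mu) x y + s * ((mu == nu0) && (x == a) && (y == b))%:R.
Proof.
move=> ha hb.
case: (ltnP x (rk D Rk mu)) => hx; last first.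
  rewrite !mx_at_out ?hx // add0r; case: eqP => [E|]; last by rewrite mulr0.
  by subst; case: eqP hx => [->|]; rewrite ?mulr0 // leqNgt ha.
case: (ltnP y (rkP D T Rk mu)) => hy; last first.
  rewrite !mx_at_out ?hy ?orbT // add0r; case: eqP => [E|]; last by rewrite mulr0.
  by subst; case: (eqP (x:=y)) hy => [->|]; rewrite ?andbF ?mulr0 // leqNgt hb.
have -> : x = Ordinal hx by []. have -> : y = Ordinal hy by [].
by rewrite !mx_at_in !mxE.
Qed.

Lemma X_agree W W' k mu j i : mu \in T ->
  (forall m, m \in T -> m \subset mu -> W' m = W m) -> X W' k mu j i = X W k mu j i.
Proof.
elim: k mu j i => [//|k IH] mu j i muT H.
rewrite /X /= (H mu muT (subxx _)); case: (leaf_of mu) => [n|] //.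
apply: eq_bigr => r' _; congr (_ * _); apply: eq_bigr => c cm.
case/childrenP: cm => cT cmu _; apply: IH => // m mT mc.
by apply: H => //; apply: subset_trans mc (proper_sub cmu).
Qed.

Lemma X_sol W nu1 : nu1 \in T -> sol W nu1 (X W).
Proof.
move=> n1T; split => // k mu j i muT n1mu.
by rewrite X_std // leaf_of_None // (card_gt1 (T_nonempty HT n1T) n1mu).
Qed.

Lemma R_off W (nu0 : {set 'I_N}) Phi k (mu : {set 'I_N}) j i : ~~ (nu0 \subset mu) ->
  tensR W nu0 Phi k mu j i = X W k mu j i.
Proof.
elim: k mu j i => [//|k IH] mu j i H.
have E : (mu == nu0) = false by apply/eqP => E; move: H; rewrite E subxx.
rewrite /= E /X /=; case: (leaf_of mu) => [n|] //.
apply: eq_bigr => r' _; congr (_ * _); apply: eq_bigr => c cm.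
case/childrenP: cm => cT cmu _; apply: IH.
by apply: contra H => H; apply: subset_trans H (proper_sub cmu).
Qed.

Lemma R_sol W (nu0 nu1 : {set 'I_N}) Phi : nu0 \in T -> nu0 \subset nu1 ->
  sol W nu1 (tensR W nu0 Phi).
Proof.
move=> n0T n01; split => //.
  move=> k mu j i muT n1mu.
  have n0mu : nu0 \proper mu by apply: sub_proper_trans n01 n1mu.
  have E : (mu == nu0) = false.
    by apply/eqP => E; move: n0mu; rewrite E properxx.
  by rewrite /= E leaf_of_None // (card_gt1 (T_nonempty HT n0T) n0mu).
move=> k c j i cT dj; apply: R_off.
exact: disj_sub_nonempty (T_nonempty HT n0T) n01 dj.
Qed.

Lemma E_off W (nu : {set 'I_N}) r k (mu : {set 'I_N}) j i : ~~ (nu \subset mu) ->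
  tens W (Some (nu, r)) k mu j i = X W k mu j i.
Proof.
elim: k mu j i => [//|k IH] mu j i H.
have E : (mu == nu) = false by apply/eqP => E; move: H; rewrite E subxx.
rewrite /X /=; case: (leaf_of mu) => [n|] //; rewrite E.
apply: eq_bigr => r' _; congr (_ * _); apply: eq_bigr => c cm.
case/childrenP: cm => cT cmu _; apply: IH.
by apply: contra H => H; apply: subset_trans H (proper_sub cmu).
Qed.

Lemma E_sol W (nu : {set 'I_N}) r : nu \in T -> sol W nu (tens W (Some (nu, r))).
Proof.
move=> nT; split => //.
  move=> k mu j i muT n1mu.
  have E : (mu == nu) = false.
    by apply/eqP => E; move: n1mu; rewrite E properxx.
  by rewrite /= leaf_of_None ?(card_gt1 (T_nonempty HT nT) n1mu) // E.
move=> k c j i cT dj; apply: E_off.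
exact: disj_sub_nonempty (T_nonempty HT nT) (subxx _) dj.
Qed.

Lemma Xb_sol W W' (nu0 nu1 : {set 'I_N}) : nu0 \in T -> nu1 \in T -> nu0 \subset nu1 ->
  (forall m, m != nu0 -> W' m = W m) -> sol W nu1 (X W').
Proof.
move=> n0T n1T n01 HW; split => //.
  move=> k mu j i muT n1mu.
  have n0mu : nu0 \proper mu by apply: sub_proper_trans n01 n1mu.
  have E : mu != nu0 by apply/eqP => E; move: n0mu; rewrite E properxx.
  rewrite X_std ?leaf_of_None ?(card_gt1 (T_nonempty HT n0T) n0mu) //.
  by rewrite HW.
move=> k c j i cT dj; apply: X_agree => // m mT mc; apply: HW.
apply/eqP => E; subst m.
by move: (disj_sub_nonempty (T_nonempty HT n0T) n01 dj); rewrite mc.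
Qed.


Section Row.
Variables (W : Wts) (nu : {set 'I_N}) (r : nat).
Hypotheses (nuT : nu \in T) (nuI : (1 < #|nu|)%N) (hr : (r < rk D Rk nu)%N).

Definition Kf : fam := tensR W nu (fun k' j i =>
  mx_at (W nu) r j * \prod_(c in children T nu) X W k' c r i).
Definition Uf (b : nat) : fam := tensR W nu (fun k' j i =>
  (j == b)%:R * \prod_(c in children T nu) X W k' c r i).

Lemma children_agree W' k c j i : c \in children T nu ->
  (forall m, m != nu -> W' m = W m) -> X W' k c j i = X W k c j i.
Proof.
case/childrenP => cT cn _ HW; apply: X_agree => // m mT mc; apply: HW.
by apply/eqP => E; subst m; move: (sub_proper_trans mc cn); rewrite properxx.
Qed.

Lemma row_bump b s : (b < rkP D T Rk nu)%N ->
  forall k mu j i, mu \in T -> nu \subset mu ->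
  X (Defs.bump W nu r b s) k mu j i = X W k mu j i + s * Uf b k mu j i.
Proof.
move=> hb k mu j i muT nmu.
have HW : forall m, m != nu -> Defs.bump W nu r b s m = W m by move=> m; apply: bump_other.
have := @prop W nu (X (Defs.bump W nu r b s)) (X W) 1 (fun _ => Uf b) 1 (fun _ => s) nuT
  (Xb_sol nuT nuT (subxx _) HW) (X_sol W nuT) (fun _ => R_sol W _ nuT (subxx _)).
move=> H; apply: (etrans (H _ k mu j i muT nmu)); first last. by rewrite big_ord1 mul1r.
move=> k' j' i'; rewrite big_ord1 mul1r; move: k' j' i'.
case=> [|k'] j' i'; first by rewrite /X /= mulr0 addr0.
rewrite X_std ?leaf_of_None // X_std ?leaf_of_None //.
rewrite /Uf /= eqxx.
under eq_bigr => r' _ do rewrite mx_at_bump // eqxx /=.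
have -> : \sum_(r' < rk D Rk nu) (mx_at (W nu) r' j' + s * ((r' == r :> nat) && (j' == b))%:R) *
     \prod_(c in children T nu) X (Defs.bump W nu r b s) k' c r' i' =
   \sum_(r' < rk D Rk nu) (mx_at (W nu) r' j' * \prod_(c in children T nu) X W k' c r' i' +
     s * ((r' == r :> nat)%:R * ((j' == b)%:R * \prod_(c in children T nu) X W k' c r' i'))).
  apply: eq_bigr => r' _.
  under eq_bigr => c cn do rewrite (children_agree _ _ _ cn HW).
  by rewrite -mulnb natrM mulrDl -!mulrA.
rewrite big_split /= -mulr_sumr.
by rewrite (sum_delta _ _ (fun r' => (j' == b)%:R * \prod_(c in children T nu) X W k' c r' i')) hr mul1r.
Qed.

Lemma row_euler : forall k mu j i, mu \in T -> nu \subset mu ->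
  Kf k mu j i = \sum_(b < rkP D T Rk nu) mx_at (W nu) r b * Uf b k mu j i.
Proof.
move=> k mu j i muT nmu.
have := @prop W nu Kf Kf _ (fun b : 'I_(rkP D T Rk nu) => Uf b) 0
  (fun b => mx_at (W nu) r b) nuT
  (R_sol W _ nuT (subxx _)) (R_sol W _ nuT (subxx _)) (fun _ => R_sol W _ nuT (subxx _)).
move=> H; apply: (etrans (H _ k mu j i muT nmu)); last by rewrite mul0r add0r.
move=> k' j' i'; rewrite mul0r add0r; move: k' j' i'.
case=> [|k'] j' i'; first by rewrite /= big1 // => b _; rewrite mulr0.
rewrite /Kf /Uf /= eqxx.
have -> : \sum_(b < rkP D T Rk nu) mx_at (W nu) r b *
     ((j' == b)%:R * \prod_(c in children T nu) X W k' c r i') =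
   \sum_(b < rkP D T Rk nu) ((b : nat) == j')%:R *
     (mx_at (W nu) r b * \prod_(c in children T nu) X W k' c r i').
  by apply: eq_bigr => b _; rewrite eq_sym; ring.
rewrite (sum_delta _ _ (fun b => mx_at (W nu) r b * \prod_(c in children T nu) X W k' c r i')).
case: ltnP => hj; first by rewrite mul1r.
by rewrite mx_at_out ?hj ?orbT // mul0r mul0r.
Qed.

Lemma E_K : sigma W nu r != 0 -> forall k mu j i, mu \in T -> nu \subset mu ->
  tens W (Some (nu, r)) k mu j i = (sigma W nu r)^-1 * Kf k mu j i.
Proof.
move=> s0 k mu j i muT nmu.
have := @prop W nu (tens W (Some (nu, r))) Kf 0 (fun _ => Kf) (sigma W nu r)^-1
  (fun _ => 0) nuT (E_sol W r nuT) (R_sol W _ nuT (subxx _)) (fun _ => R_sol W _ nuT (subxx _)).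
move=> H; apply: (etrans (H _ k mu j i muT nmu)); last by rewrite big_ord0 addr0.
move=> k' j' i'; rewrite big_ord0 addr0; move: k' j' i'.
case=> [|k'] j' i'; first by rewrite /= mulr0.
rewrite /= leaf_of_None // eqxx (negbTE s0) /Kf /= eqxx -!mulrA; congr (_ * (_ * _)).
apply: eq_bigr => c /childrenP[cT cn _]; apply: E_off.
by apply/negP => H1; move: (sub_proper_trans H1 cn); rewrite properxx.
Qed.

End Row.

Section Col.
Variables (W : Wts) (nu : {set 'I_N}) (r : nat) (c : {set 'I_N}).
Hypotheses (nuT : nu \in T) (nuI : (1 < #|nu|)%N) (hr : (r < rk D Rk nu)%N)
  (cnu : c \in children T nu) (hrc : (r < rkP D T Rk c)%N).

Definition Yf (a : nat) (k' : nat) (i : Idx D) : R :=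
  if leaf_of c is Some n then ((i n : nat) == a)%:R
  else \prod_(c' in children T c) X W k' c' a i.
Definition Vf (a : nat) : fam := tensR W c (fun k' j i => (j == r)%:R * Yf a k' i).
Definition Cf : fam := tensR W c (fun k' j i => (j == r)%:R * X W k'.+1 c r i).

Let cT : c \in T. Proof. by case/childrenP: cnu. Qed.
Let cn : c \proper nu. Proof. by case/childrenP: cnu. Qed.
Let cnu' : c \subset nu. Proof. exact: proper_sub cn. Qed.

Lemma col_bump a s : (a < rk D Rk c)%N ->
  forall k mu j i, mu \in T -> c \subset mu ->
  X (Defs.bump W c a r s) k mu j i = X W k mu j i + s * Vf a k mu j i.
Proof.
move=> ha k mu j i muT cmu.
have HW : forall m, m != c -> Defs.bump W c a r s m = W m by move=> m; apply: bump_other.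
have := @prop W c (X (Defs.bump W c a r s)) (X W) 1 (fun _ => Vf a) 1 (fun _ => s) cT
  (Xb_sol cT cT (subxx _) HW) (X_sol W cT) (fun _ => R_sol W _ cT (subxx _)).
move=> H; apply: (etrans (H _ k mu j i muT cmu)); last by rewrite big_ord1 mul1r.
move=> k' j' i'; rewrite big_ord1 mul1r; move: k' j' i'.
case=> [|k'] j' i'; first by rewrite /X /= mulr0 addr0.
rewrite /Vf /= eqxx /Yf.
case E: (leaf_of c) => [n|].
  rewrite /X /= E mx_at_bump // eqxx /= -mulnb natrM; congr (_ + _); ring.
rewrite X_std // X_std //.
have -> : \sum_(r' < rk D Rk c) mx_at (Defs.bump W c a r s c) r' j' *
     \prod_(c' in children T c) X (Defs.bump W c a r s) k' c' r' i' =
   \sum_(r' < rk D Rk c) (mx_at (W c) r' j' * \prod_(c' in children T c) X W k' c' r' i' +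
     s * ((r' == a :> nat)%:R * ((j' == r)%:R * \prod_(c' in children T c) X W k' c' r' i'))).
  apply: eq_bigr => r' _.
  under eq_bigr => c' c'n do rewrite (children_agree _ _ _ c'n HW).
  by rewrite mx_at_bump // eqxx /= -mulnb natrM mulrDl -!mulrA.
rewrite big_split /= -mulr_sumr.
by rewrite (sum_delta _ _ (fun r' => (j' == r)%:R * \prod_(c' in children T c) X W k' c' r' i')) ha mul1r.
Qed.

Lemma col_euler : forall k mu j i, mu \in T -> c \subset mu ->
  Cf k mu j i = \sum_(a < rk D Rk c) mx_at (W c) a r * Vf a k mu j i.
Proof.
move=> k mu j i muT cmu.
have := @prop W c Cf Cf _ (fun a : 'I_(rk D Rk c) => Vf a) 0
  (fun a => mx_at (W c) a r) cT
  (R_sol W _ cT (subxx _)) (R_sol W _ cT (subxx _)) (fun _ => R_sol W _ cT (subxx _)).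
move=> H; apply: (etrans (H _ k mu j i muT cmu)); last by rewrite mul0r add0r.
move=> k' j' i'; rewrite mul0r add0r; move: k' j' i'.
case=> [|k'] j' i'; first by rewrite /= big1 // => b _; rewrite mulr0.
rewrite /Cf /Vf /= eqxx /Yf.
case E: (leaf_of c) => [n|].
  rewrite /X /= E.
  have -> : \sum_(a < rk D Rk c) mx_at (W c) a r * ((j' == r)%:R * ((i' n : nat) == a)%:R) =
     (j' == r)%:R * \sum_(a < rk D Rk c) ((a : nat) == i' n)%:R * mx_at (W c) a r.
    by rewrite mulr_sumr; apply: eq_bigr => a _; rewrite (eq_sym (a : nat)); ring.
  rewrite (sum_delta _ _ (fun a => mx_at (W c) a r)).
  by rewrite {2}/rk E ltn_ord mul1r.
rewrite X_std // mulr_sumr; apply: eq_bigr => a _; ring.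
Qed.

Lemma Cf_c k r' i : Cf k c r' i = (r' == r)%:R * X W k c r i.
Proof. by case: k => [|k]; rewrite /Cf /= ?mulr0 // eqxx. Qed.

Lemma C_K : forall k mu j i, mu \in T -> nu \subset mu ->
  Cf k mu j i = Kf W nu r k mu j i.
Proof.
move=> k mu j i muT nmu.
have := @prop W nu Cf (Kf W nu r) 0 (fun _ => Cf) 1 (fun _ => 0) nuT
  (R_sol W _ cT cnu') (R_sol W _ nuT (subxx _)) (fun _ => R_sol W _ cT cnu').
move=> H; apply: (etrans (H _ k mu j i muT nmu)); last by rewrite big_ord0 addr0 mul1r.
move=> k' j' i'; rewrite big_ord0 addr0 mul1r; move: k' j' i'.
case=> [|k'] j' i'; first by [].
have ne : (nu == c) = false by apply/eqP => E; move: cn; rewrite E properxx.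
rewrite /Cf /= ne leaf_of_None // -/Cf /Kf /= eqxx.
set Q := fun r' : nat => \prod_(c' in children T nu | c' != c) X W k' c' r' i'.
have HQ : forall r' : nat, \prod_(c' in children T nu) Cf k' c' r' i' =
    (r' == r)%:R * X W k' c r i' * Q r'.
  move=> r'; rewrite (bigD1 c) //= Cf_c; congr (_ * _).
  apply: eq_bigr => c' /andP[c'n c'c]; apply: R_off.
  apply: disj_sub_nonempty (T_nonempty HT cT) (subxx _) _.
  by have := children_disj HT cnu c'n; rewrite eq_sym c'c; apply.
rewrite (eq_bigr (fun r' : 'I_(rk D Rk nu) => ((r' : nat) == r)%:R *
    (mx_at (W nu) r' j' * X W k' c r i' * Q r'))); last first.
  by move=> r' _; rewrite HQ; ring.
rewrite (sum_delta _ _ (fun r' => mx_at (W nu) r' j' * X W k' c r i' * Q r')) hr mul1r.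
by rewrite (bigD1 c) //= /Q; ring.
Qed.

End Col.

End Tens.

Section Ineq.
Variable R : realType.

Lemma prod_const_seq (ns : seq R) (c : R) : \prod_(x <- ns) c = c ^+ size ns.
Proof. by elim: ns => [|x s IH]; rewrite ?big_nil ?big_cons ?IH ?exprS. Qed.

Lemma sum_const_seq (ns : seq R) (c : R) : \sum_(x <- ns) c = (size ns)%:R * c.
Proof.
elim: ns => [|x s IH]; rewrite ?big_nil ?big_cons ?IH ?mul0r //=.
by rewrite -addn1 natrD mulrDl mul1r addrC.
Qed.

Lemma min_exists (ns : seq R) : ns != [::] -> exists2 m, m \in ns & forall x, x \in ns -> m <= x.
Proof.
elim: ns => [//|x s IH] _.
case: (eqVneq s [::]) => [->|sn].
  by exists x => [|y]; rewrite ?mem_head // inE => /eqP ->.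
have [m ms Hm] := IH sn.
case: (lerP x m) => xm.
  exists x; first exact: mem_head.
  by move=> y; rewrite inE => /orP[/eqP ->//|/Hm]; apply: le_trans.
exists m; first by rewrite inE ms orbT.
by move=> y; rewrite inE => /orP[/eqP ->|/Hm //]; apply: ltW.
Qed.

Lemma ineq (ns : seq R) (s eps : R) : 0 < s -> 0 <= eps ->
  (forall x, x \in ns -> 0 < x) ->
  (forall x y, x \in ns -> y \in ns -> `|x - y| <= eps) ->
  \prod_(x <- ns) x = s ^+ 2 -> (0 < size ns)%N ->
  let q := powR s (2 / (size ns)%:R) + eps in
  (size ns)%:R / q <= \sum_(x <- ns) x^-1 /\
  s ^+ 2 * \sum_(x <- ns) x^-1 <= (size ns)%:R * q ^+ (size ns - 1).
Proof.
move=> s0 e0 Hpos Hdiff Hprod L0 q.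
set L := size ns.
have ns0 : ns != [::] by case: (ns) L0 L.
have [m mns Hm] := min_exists ns0.
set p := powR s (2 / L%:R).
have p0 : 0 <= p by apply: powR_ge0.
have Lr0 : (L%:R : R) != 0 by rewrite pnatr_eq0 -lt0n.
have pL : p ^+ L = s ^+ 2.
  rewrite /p -powR_mulrn ?powR_ge0 // -powRrM mulfVK //.
  by rewrite -[2 in LHS]/(2%:R) powR_mulrn // ltW.
have mL : m ^+ L <= s ^+ 2.
  rewrite -Hprod -prod_const_seq [X in X <= _]big_seq [X in _ <= X]big_seq.
  apply: ler_prod => x xns.
  by rewrite (ltW (Hpos m mns)) Hm.
have mp : m <= p.
  rewrite leNgt; apply/negP => pm.
  have := ltrXn2r L p0 pm; rewrite -lt0n L0 => H.
  by move: (lt_le_trans H mL); rewrite pL ltxx.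
have xq : forall x, x \in ns -> x <= q.
  move=> x xns; have := Hdiff x m xns mns; rewrite ler_norml => /andP[_ H].
  rewrite /q -/p; lra.
have q0 : 0 < q by have := Hpos m mns; have := xq m mns; lra.
split.
  rewrite -sum_const_seq.
  rewrite [X in X <= _]big_seq [X in _ <= X]big_seq; apply: ler_sum => x xns.
  by rewrite lef_pV2 ?posrE ?(Hpos x xns) ?(xq x xns).
rewrite mulr_sumr.
apply: le_trans (_ : \sum_(x <- ns) q ^+ (L - 1) <= _); last first.
  by rewrite sum_const_seq.
rewrite [X in X <= _]big_seq [X in _ <= X]big_seq; apply: ler_sum => x xns.
have Hp : \prod_(y <- ns) y = x * \prod_(y <- rem x ns) y.
  by rewrite (perm_big _ (perm_to_rem xns)) big_cons.
rewrite -Hprod Hp.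
rewrite mulrAC mulfV ?gt_eqF ?Hpos // mul1r.
have -> : (L - 1)%N = size (rem x ns) by rewrite size_rem // subn1.
rewrite -prod_const_seq [X in X <= _]big_seq [X in _ <= X]big_seq.
apply: ler_prod => y yrem.
have yns : y \in ns by apply: (mem_rem yrem).
by rewrite (ltW (Hpos y yns)) xq.
Qed.

End Ineq.

Section Main.
Variables (R : realType) (N : nat) (D : 'I_N -> nat).
Variables (T : {set {set 'I_N}}) (Rk : {set 'I_N} -> nat).
Variables (L : tensor R D -> R) (gradL : tensor R D -> tensor R D).
Variable (W : R -> Weights R D T Rk).
Hypotheses (HT : is_mode_tree T) (HG : is_gradient L gradL) (GF : gradient_flow L W).

Let G s := gradL (endT (W s)).

Lemma entry_deriv nu0 (a : 'I_(rk D Rk nu0)) (b : 'I_(rkP D T Rk nu0)) s (P : tensor R D) :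
  0 <= s -> nu0 \in T ->
  (forall u i, endT (Defs.bump (W s) nu0 a b u) i = endT (W s) i + u * P i) ->
  Do (fun u => W u nu0 a b) s (- tdot (G s) P).
Proof.
move=> s0 n0T HP.
have [d [Hd Hw]] := GF s0 n0T a b.
have E : (fun u => phiH L (Defs.bump (W s) nu0 a b u)) =
         (fun u => L (tadd (endT (W s)) (fun i => u * P i))).
  apply: boolp.funext => u; rewrite /phiH; congr L.
  by apply: boolp.funext => i; rewrite /tadd HP.
rewrite E in Hd.
have Ed := hd_unique Hd (grad_deriv (endT (W s)) P HG).
by rewrite Ed in Hw; apply: Do_of.
Qed.

Lemma tdot_sum n (w : 'I_n -> R) (Ps : 'I_n -> tensor R D) (K : tensor R D) Gt :
  (forall i, K i = \sum_(b < n) w b * Ps b i) ->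
  \sum_(b < n) w b * tdot Gt (Ps b) = tdot Gt K.
Proof.
move=> HK; rewrite /tdot.
under [RHS]eq_bigr => i _ do rewrite HK mulr_sumr.
rewrite exchange_big /=; apply: eq_bigr => b _; rewrite mulr_sumr.
by apply: eq_bigr => i _; ring.
Qed.

Section RowCol.
Variables (nu : {set 'I_N}) (r : nat).
Hypotheses (nuT : nu \in T) (nuI : (1 < #|nu|)%N) (hr : (r < rk D Rk nu)%N).

Definition KT s : tensor R D := fun i => Kf (W s) nu r N.+1 setT 0 i.

Let setTT : setT \in T. Proof. by case: HT. Qed.

Lemma row_sq_deriv s : 0 <= s ->
  Do (fun u => \sum_(j < rkP D T Rk nu) mx_at (W u nu) r j ^+ 2) s
     (2 * - tdot (G s) (KT s)).
Proof.
move=> s0.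
pose Pb (b : 'I_(rkP D T Rk nu)) : tensor R D := fun i => Uf (W s) nu r b N.+1 setT 0 i.
have Hb : forall b : 'I_(rkP D T Rk nu),
    Do (fun u => mx_at (W u nu) r b) s (- tdot (G s) (Pb b)).
  move=> b; apply: Do_ext (@entry_deriv nu (Ordinal hr) b s (Pb b) s0 nuT _) => [u|].
    by rewrite (mx_at_in (W u nu) (Ordinal hr) b).
  move=> u i; rewrite /endT /Pb.
  exact: (row_bump HT (W s) nuT nuI hr u (ltn_ord b) N.+1 0 i setTT (subsetT _)).
have := Do_sum (index_enum 'I_(rkP D T Rk nu)) (fun b => Do_sqr (Hb b)).
apply: Do_val.
rewrite -(tdot_sum (w := fun b => mx_at (W s nu) r b) (Ps := Pb)); last first.
  by move=> i; rewrite /KT /Pb (row_euler HT (W s) r nuT N.+1 0 i setTT (subsetT _)).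
by rewrite -sumrN mulr_sumr; apply: eq_bigr => b _; ring.
Qed.

Section Col.
Variable c : {set 'I_N}.
Hypotheses (cnu : c \in children T nu) (hrc : (r < rkP D T Rk c)%N).

Lemma col_sq_deriv s : 0 <= s ->
  Do (fun u => \sum_(a < rk D Rk c) mx_at (W u c) a r ^+ 2) s
     (2 * - tdot (G s) (KT s)).
Proof.
move=> s0.
have cT : c \in T by case/childrenP: cnu.
have cnu' : c \subset nu by case/childrenP: cnu => _ /proper_sub.
pose Pb (a : 'I_(rk D Rk c)) : tensor R D := fun i => Vf (W s) r c a N.+1 setT 0 i.
have Hb : forall a : 'I_(rk D Rk c),
    Do (fun u => mx_at (W u c) a r) s (- tdot (G s) (Pb a)).
  move=> a; apply: Do_ext (@entry_deriv c a (Ordinal hrc) s (Pb a) s0 cT _) => [u|].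
    by rewrite (mx_at_in (W u c) a (Ordinal hrc)).
  move=> u i; rewrite /endT /Pb.
  exact: (col_bump HT (W s) cnu hrc u (ltn_ord a) N.+1 0 i setTT (subsetT _)).
have := Do_sum (index_enum 'I_(rk D Rk c)) (fun b => Do_sqr (Hb b)).
apply: Do_val.
rewrite -(tdot_sum (w := fun a => mx_at (W s c) a r) (Ps := Pb)); last first.
  move=> i; rewrite /KT /Pb -(col_euler HT (W s) r cnu N.+1 0 i setTT (subsetT _)).
  by rewrite (C_K HT (W s) nuT nuI hr cnu N.+1 0 i setTT (subsetT _)).
by rewrite -sumrN mulr_sumr; apply: eq_bigr => b _; ring.
Qed.

End Col.
End RowCol.
End Main.


Unset Implicit Arguments.

Theorem theorem2 (R : realType) (N : nat) (D : 'I_N -> nat)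
    (T : {set {set 'I_N}}) (Rk : {set 'I_N} -> nat)
    (L : tensor R D -> R) (gradL : tensor R D -> tensor R D)
    (W : R -> Weights R D T Rk) (eps : R) :
  (forall n, (0 < D n)%N) ->
  is_mode_tree T ->
  (forall nu, interior T nu -> (0 < Rk nu)%N) ->
  (forall X, 0 <= L X) ->
  is_gradient L gradL ->
  locally_lipschitz gradL ->
  gradient_flow L W ->
  0 <= eps ->
  unbalancedness (W 0) = eps ->
  forall (nu : {set 'I_N}) (r : nat) (t : R),
    interior T nu -> (r < rk D Rk nu)%N -> 0 <= t ->
    0 < sigma (W t) nu r ->
    let Lnu := (#|children T nu| + 1)%N in
    let s := sigma (W t) nu r in
    let g := tdot (topp (gradL (endT (W t)))) (Etens (W t) nu r) in
    let lo := s ^+ 2 / (powR s (2 / Lnu%:R) + eps) * Lnu%:R * g in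
    let hi := (powR s (2 / Lnu%:R) + eps) ^+ (Lnu - 1) * Lnu%:R * g in
    exists d : R,
      has_deriv_nonneg (fun u => sigma (W u) nu r) t d /\
      (if 0 <= g then lo <= d <= hi else hi <= d <= lo).
Proof.
move=> Dpos HT HRk Lpos HG Hlip GF e0 Hunb nu r t nuI' hr t0 sp Lnu s g lo hi.
have /andP[nuT nuI] := nuI'.
have setTT : setT \in T by case: HT.
pose A u := \sum_(j < rkP D T Rk nu) mx_at (W u nu) r j ^+ 2.
pose C c u := \sum_(a < rk D Rk c) mx_at (W u c) a r ^+ 2.
have A0 : forall u, 0 <= A u by move=> u; apply: sumr_ge0 => j _; apply: sqr_ge0.
have C0 : forall c u, 0 <= C c u by move=> c u; apply: sumr_ge0 => j _; apply: sqr_ge0.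
have Es : forall u, sigma (W u) nu r =
   Num.sqrt (A u) * \prod_(c in children T nu) Num.sqrt (C c u) by [].
have [srow scol] : 0 < Num.sqrt (A t) /\
    forall c, c \in children T nu -> 0 < Num.sqrt (C c t).
  have : sigma (W t) nu r != 0 by rewrite gt_eqF.
  rewrite Es mulf_eq0 negb_or => /andP[h1 /prodf_neq0 h2]; split.
    by rewrite lt_def h1 sqrtr_ge0.
  by move=> c cn; rewrite lt_def h2 // sqrtr_ge0.
have hrc : forall c, c \in children T nu -> (r < rkP D T Rk c)%N.
  move=> c cn; rewrite ltnNge; apply/negP => H.
  have := scol c cn; rewrite /C big1 ?sqrtr0 ?ltxx // => a _.
  by rewrite mx_at_out ?H ?orbT // expr0n.
pose gam u := - tdot (gradL (endT (W u))) (KT W nu r u).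
have Krow : forall u, 0 <= u -> Do A u (2 * gam u).
  by move=> u u0; apply: (row_sq_deriv HT HG GF nuT nuI hr u0).
have Kcol : forall c, c \in children T nu -> forall u, 0 <= u -> Do (C c) u (2 * gam u).
  by move=> c cn u u0; apply: (col_sq_deriv HT HG GF nuT nuI hr cn (hrc c cn) u0).
have cons : forall c, c \in children T nu -> A t - C c t = A 0 - C c 0.
  move=> c cn.
  have H : forall u, 0 <= u -> u <= t -> Do (fun u => A u - C c u) u 0.
    move=> u u0 _; have := Do_add (Krow u u0) (Do_opp (Kcol c cn u u0)).
    by apply: Do_val; rewrite addrN.
  exact: (Do_const_eq t0 H).
have ub : forall x0 y0, x0 \in lc_sqnorms (W 0) nu r -> y0 \in lc_sqnorms (W 0) nu r ->
    `|x0 - y0| <= eps.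
  move=> x0 y0 hx hy; rewrite -Hunb /unbalancedness.
  apply: (le_trans _ (le_bigmax_cond _ _ nuI')).
  apply: (le_trans _ (le_bigmax _ _ (Ordinal hr))).
  apply: (le_trans _ (le_bigmax_seq _ _ _ _ hx isT)).
  exact: (le_bigmax_seq _ _ _ _ hy isT).
have Arow : forall u, row_norm (W u) nu r ^+ 2 = A u.
  by move=> u; rewrite /row_norm sqr_sqrtr //; apply: (A0 u).
have Acol : forall c u, col_norm (W u) c r ^+ 2 = C c u.
  by move=> c u; rewrite /col_norm sqr_sqrtr //; apply: (C0 c u).
have mapx : forall x, x \in lc_sqnorms (W t) nu r ->
    exists2 x0, x0 \in lc_sqnorms (W 0) nu r & x - A t = x0 - A 0.
  move=> x; rewrite /lc_sqnorms inE => /orP[/eqP ->|/mapP[c cin ->]].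
    exists (row_norm (W 0) nu r ^+ 2); first exact: mem_head.
    by rewrite !Arow !subrr.
  exists (col_norm (W 0) c r ^+ 2).
    by rewrite inE; apply/orP; right; apply: map_f.
  rewrite !Acol; have := cons c; rewrite mem_enum in cin => /(_ cin); lra.
have pw : forall x y, x \in lc_sqnorms (W t) nu r -> y \in lc_sqnorms (W t) nu r ->
    `|x - y| <= eps.
  move=> x y hx hy.
  have [x0 hx0 Ex] := mapx x hx; have [y0 hy0 Ey] := mapx y hy.
  have -> : x - y = x0 - y0 by lra.
  exact: ub.
have Ar : 0 < A t by rewrite -sqrtr_gt0.
have Cr : forall c, c \in children T nu -> 0 < C c t.
  by move=> c cn; rewrite -sqrtr_gt0; apply: scol.
have Hr := Do_sqrt Ar (Krow t t0).
have Hc : forall c, c \in enum (children T nu) ->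
    Do (fun u => Num.sqrt (C c u)) t (2 * gam t / (2 * Num.sqrt (C c t))).
  by move=> c; rewrite mem_enum => cn; exact: Do_sqrt (Cr c cn) (Kcol c cn t t0).
have Hnz : forall c, c \in enum (children T nu) -> Num.sqrt (C c t) != 0.
  by move=> c; rewrite mem_enum => cn; rewrite gt_eqF // scol.
have Hp := @Do_prod R _ (enum (children T nu)) (fun c u => Num.sqrt (C c u))
   (fun c => 2 * gam t / (2 * Num.sqrt (C c t))) t Hc Hnz.
have Hs := Do_mul Hr Hp.
set P := \prod_(c <- enum (children T nu)) Num.sqrt (C c t) in Hs.
set Sg := \sum_(c <- enum (children T nu)) _ in Hs.
exists (Num.sqrt (A t) * (P * Sg) + P * (2 * gam t / (2 * Num.sqrt (A t)))).
split.
  by apply: Do_to; apply: Do_ext Hs => u; rewrite Es big_enum.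
have sP : s = Num.sqrt (A t) * P by rewrite /s Es -big_enum.
have sne : s != 0 by rewrite gt_eqF.
have Ane : Num.sqrt (A t) != 0 by rewrite gt_eqF.
have Pne : P != 0 by move: sne; rewrite sP mulf_eq0 negb_or => /andP[].
have gv : g = s^-1 * gam t.
  rewrite /g /tdot /Etens -/s (negbTE sne) /gam /tdot mulrN mulr_sumr -sumrN.
  apply: eq_bigr => i _.
  rewrite /topp (E_K HT nuT nuI sne N.+1 0 i setTT (subsetT _)) /KT; ring.
pose S := \sum_(x <- lc_sqnorms (W t) nu r) x^-1.
have SE : S = (Num.sqrt (A t) ^+ 2)^-1 +
    \sum_(c <- enum (children T nu)) (Num.sqrt (C c t) ^+ 2)^-1.
  by rewrite /S /lc_sqnorms big_cons big_map.
have SgE : Sg = gam t * \sum_(c <- enum (children T nu)) (Num.sqrt (C c t) ^+ 2)^-1.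
  rewrite /Sg mulr_sumr; apply: eq_big_seq => c cin.
  by field; rewrite Hnz.
have dE : Num.sqrt (A t) * (P * Sg) + P * (2 * gam t / (2 * Num.sqrt (A t))) =
    s ^+ 2 * g * S.
  by rewrite SgE gv SE sP; field; rewrite Ane Pne.
rewrite dE.
have Hpos : forall x, x \in lc_sqnorms (W t) nu r -> 0 < x.
  move=> x; rewrite /lc_sqnorms inE => /orP[/eqP ->|/mapP[c cin ->]].
    exact: exprn_gt0 srow.
  rewrite mem_enum in cin; exact: exprn_gt0 (scol c cin).
have Hprod : \prod_(x <- lc_sqnorms (W t) nu r) x = s ^+ 2.
  by rewrite /lc_sqnorms big_cons big_map prodrXl -exprMn /s /sigma big_enum.
have Hsize : size (lc_sqnorms (W t) nu r) = Lnu.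
  by rewrite /= size_map -cardE /Lnu addn1.
have L0 : (0 < size (lc_sqnorms (W t) nu r))%N by rewrite Hsize /Lnu addn1.
have := ineq sp e0 Hpos pw Hprod L0.
move=> H; have [I1 I2] := H; clear H.
rewrite Hsize -/S -/s in I1 I2.
rewrite /lo /hi; clear lo hi.
set q := powR s (2 / Lnu%:R) + eps in I1 I2 *.
have s2 : 0 < s ^+ 2 by exact: exprn_gt0 sp.
clearbody q g s Lnu S.
have E1 : s ^+ 2 / q * Lnu%:R * g = (s ^+ 2 * g) * (Lnu%:R / q) by ring.
have E2 : q ^+ (Lnu - 1) * Lnu%:R * g = g * (Lnu%:R * q ^+ (Lnu - 1)) by ring.
rewrite E1 E2.
move: I1 I2; set X := Lnu%:R / q; set Y := Lnu%:R * q ^+ (Lnu - 1) => I1 I2.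
clearbody X Y.
case: ifP => g0.
  apply/andP; split.
    by rewrite ler_wpM2l // mulr_ge0 // ltW.
  by rewrite mulrAC mulrC ler_wpM2l.
have gn : g < 0 by rewrite ltNge g0.
have H1 : 0 <= s ^+ 2 * (S - X) by rewrite mulr_ge0 ?subr_ge0 // ltW.
apply/andP; split; nra.
Qed.
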